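(* Let $u$ be a word over a finite alphabet and let $v$ be a run in $u$, with shortest period $p$ and exponent $\sigma(v)$. If $p=1$, then $\sigma(v)=|H(v)|+1$. If $p\ge 2$, then $\lceil \sigma(v)\rceil \le \frac{|H(v)|}{2}+3$.
   Context: For a word $u=u_1\cdots u_m$, the (shortest) period is the smallest positive integer $p$ with $u_i=u_{i+p}$ for all $1\le i\le m-p$; $u[i..j]=u_i\cdots u_j$. A run in $u$ is an interval $[i..j]$ such that the period $p$ of $u[i..j]$ satisfies $2p\le j-i+1$, and $u[i-1]\ne u[i+p-1]$ (or $i=1$) and $u[j-p+1]\ne u[j+1]$ (or $j=|u|$); its exponent is $\sigma(v)=(j-i+1)/p$. Words $x,y$ are cyclically equivalent if $x=st$, $y=ts$ for some words $s,t$. The inter-positions of $u$ are the $|u|-1$ positions lying between consecutive letters of $u$. Handles: for a run $v$ with period $p$, let $w$ be the prefix of (the factor) $v$ of length $p$, and let $w_{\min}$, $w_{\max}$ be the lexicographically minimal and maximal words cyclically equivalent to $w$. Then $H(v)$ is the set of inter-positions defined by: (a) if $w_{\min}=w_{\max}$, $H(v)$ consists of all inter-positions lying within $v$; (b) if $w_{\min}\ne w_{\max}$, $H(v)$ consists of the inter-positions lying between two consecutive (adjacent) occurrences of $w_{\min}$ inside $v$ and those lying between two consecutive occurrences of $w_{\max}$ inside $v$. *)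

(* Defs.v *)
From HB Require Import structures.
From mathcomp Require Import all_boot all_order all_algebra.
Set Implicit Arguments. Unset Strict Implicit. Unset Printing Implicit Defensive.
Import Order.TTheory GRing.Theory Num.Theory.

Section Words.
Variables (d : Order.disp_t) (T : orderType d).

(* factor u i j = u[i..j] (0-based, inclusive) *)
Definition factor (u : seq T) (i j : nat) : seq T := take (j.+1 - i) (drop i u).

Definition is_period (w : seq T) (p : nat) : bool :=
  (0 < p) && (drop p w == take (size w - p) w).

Definition period (w : seq T) : nat := (find (is_period w) (iota 1 (size w))).+1.

Definition is_run (u : seq T) (i j : nat) : bool :=
  let p := period (factor u i j) in
  [&& i <= j, j < size u, 2 * p <= j.+1 - i,
      (i == 0) || (onth u i.-1 != onth u (i + p).-1)
    & (j.+1 == size u) || (onth u (j.+1 - p) != onth u j.+1)].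

Definition exponent (u : seq T) (i j : nat) : rat :=
  (j.+1 - i)%:R / (period (factor u i j))%:R.

Fixpoint lexle (s t : seq T) : bool :=
  match s, t with
  | [::], _ => true
  | _ :: _, [::] => false
  | x :: s', y :: t' => (x < y)%O || ((x == y) && lexle s' t')
  end.

Definition conjugates (w : seq T) : seq (seq T) := [seq rot k w | k <- iota 0 (size w)].

Definition cyc_min (w : seq T) : seq T :=
  foldr (fun x m => if lexle x m then x else m) w (conjugates w).
Definition cyc_max (w : seq T) : seq T :=
  foldr (fun x m => if lexle m x then x else m) w (conjugates w).

(* Inter-positions of u: k : 'I_(size u).-1 is the inter-position between
   letters k and k+1 (0-based). *)
Definition handles (u : seq T) (i j : nat) : {set 'I_(size u).-1} :=
  let v := factor u i j in
  let p := period v in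
  let w := take p v in
  let wmin := cyc_min w in
  let wmax := cyc_max w in
  if wmin == wmax then [set k : 'I_(size u).-1 | (i <= k) && (k < j)]
  else [set k : 'I_(size u).-1 |
          [exists s : 'I_(size u),
             [&& i <= s, s + 2 * p <= j.+1, k == s + p - 1 :> nat &
              ((factor u s (s + p - 1) == wmin) && (factor u (s + p) (s + 2 * p - 1) == wmin))
              || ((factor u s (s + p - 1) == wmax) && (factor u (s + p) (s + 2 * p - 1) == wmax))]]].

End Words.

(* Main.v *)
Require Import Defs.
From HB Require Import structures.
From mathcomp Require Import all_boot all_order all_algebra.
From mathcomp Require Import zify ring lra.
Import Order.TTheory GRing.Theory Num.Theory.
Set Implicit Arguments. Unset Strict Implicit.

Lemma nth_rot_mod (T : Type) (x0 : T) (w : seq T) k n :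
  k < size w -> n < size w ->
  nth x0 (rot k w) n = nth x0 w ((n + k) %% size w).
Proof.
move=> Hk Hn; rewrite /rot nth_cat size_drop.
case: ltnP => H.
  rewrite nth_drop modn_small; [congr nth; lia | lia].
rewrite nth_take; last lia.
have -> : (n + k) = (n - (size w - k)) + size w by lia.
rewrite modnDr modn_small //; lia.
Qed.

Lemma foldr_pick (T : eqType) (f : T -> T -> T) (w : T) (s : seq T) :
  (forall x y, f x y = x \/ f x y = y) ->
  foldr f w s \in w :: s.
Proof.
move=> Hf; elim: s => [|x s IH] /=; first by rewrite inE.
case: (Hf x (foldr f w s)) => ->; first by rewrite !inE eqxx orbT.
move: IH; rewrite !inE => /orP [->|->] //; by rewrite !orbT.
Qed.

Lemma card_ge (N n : nat) (A : {set 'I_N}) (g : nat -> nat) :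
  (forall x y, x < n -> y < n -> g x = g y -> x = y) ->
  (forall x, x < n -> g x < N /\ (forall k : 'I_N, val k = g x -> k \in A)) ->
  n <= #|A|.
Proof.
case: N A => [|N] A Hinj Hg.
  case: n Hinj Hg => // n _ Hg; by case: (Hg 0 (ltn0Sn _)).
have -> : n = #|[set (inord (g x) : 'I_N.+1) | x : 'I_n]|.
  rewrite card_imset ?card_ord // => x y /(congr1 val) /=.
  rewrite !inordK; [|by case: (Hg _ (ltn_ord y))|by case: (Hg _ (ltn_ord x))].
  by move=> /(Hinj _ _ (ltn_ord x) (ltn_ord y)) /val_inj.
apply: subset_leq_card; apply/subsetP => k /imsetP [x _ ->].
case: (Hg _ (ltn_ord x)) => H1 H2; apply: H2; exact: inordK.
Qed.

Section W.
Variables (d : Order.disp_t) (T : finOrderType d).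

Lemma size_factor (u : seq T) i j : i <= j -> j < size u ->
  size (factor u i j) = j.+1 - i.
Proof. move=> H1 H2; rewrite /factor size_take size_drop; case: ltnP => /= ?; lia. Qed.

Lemma nth_factor x0 (u : seq T) i j n : n < j.+1 - i ->
  nth x0 (factor u i j) n = nth x0 u (i + n).
Proof. by move=> H; rewrite /factor nth_take // nth_drop. Qed.

Lemma period_ok (v : seq T) : 0 < size v ->
  is_period v (period v) /\ period v <= size v.
Proof.
move=> Hv.
have Hhas : has (is_period v) (iota 1 (size v)).
  apply/hasP; exists (size v); first by rewrite mem_iota; lia.
  by rewrite /is_period Hv drop_size subnn take0.
have Hf : find (is_period v) (iota 1 (size v)) < size v.
  by rewrite -{2}(size_iota 1 (size v)) -has_find.
have := nth_find 0 Hhas; rewrite nth_iota // add1n => H.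
Qed.

Lemma periodic x0 (v : seq T) p : is_period v p ->
  forall x, x < size v -> nth x0 v x = nth x0 v (x %% p).
Proof.
case/andP => Hp /eqP E.
have Hs : forall n, n + p < size v -> nth x0 v (n + p) = nth x0 v n.
  move=> n Hn; have := congr1 (fun s => nth x0 s n) E => /=.
  rewrite nth_drop nth_take; [by rewrite addnC | lia].
move=> x; elim/ltn_ind: x => x IH Hx.
case: (ltnP x p) => Hxp; first by rewrite modn_small.
have -> : x = (x - p) + p by lia.
rewrite Hs; last lia.
by rewrite IH; [rewrite modnDr | lia | lia].
Qed.

Lemma factor_rot (u : seq T) i j p s : i <= j -> j < size u ->
  is_period (factor u i j) p -> p <= j.+1 - i -> s + p <= j.+1 - i ->
  factor u (i + s) (i + s + p - 1) = rot (s %% p) (take p (factor u i j)).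
Proof.
move=> Hij Hju Hper Hpm Hsp.
have Hp : 0 < p by case/andP: Hper.
have x0 : T by move: Hju; case: (u) => // a _ _; exact: a.
have Hsv := size_factor Hij Hju.
have Hw : size (take p (factor u i j)) = p by rewrite size_take Hsv; case: ltnP => /= ?; lia.
apply: (@eq_from_nth _ x0).
  rewrite size_rot Hw size_factor; lia.
move=> n; rewrite size_factor; [move=> Hn | lia | lia].
rewrite nth_factor; last lia.
rewrite nth_rot_mod Hw ?ltn_pmod //; last lia.
rewrite nth_take ?ltn_pmod //.
have -> : nth x0 u (i + s + n) = nth x0 (factor u i j) (s + n).
  rewrite nth_factor ?addnA //; lia.
rewrite (periodic x0 Hper); last by rewrite Hsv; lia.
by rewrite modnDmr addnC.
Qed.
Lemma cyc_rot (w : seq T) b : 0 < size w ->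
  exists2 k, k < size w & (if b then cyc_min w else cyc_max w) = rot k w.
Proof.
move=> Hw.
have : (if b then cyc_min w else cyc_max w) \in w :: conjugates w.
  case: b; apply: foldr_pick => x y; case: ifP => _; by [left | right].
rewrite inE => /orP [/eqP ->|]; first by exists 0 => //; rewrite rot0.
by case/mapP => k; rewrite mem_iota add0n => Hk ->; exists k.
Qed.
Lemma card_le (N n : nat) (A : {set 'I_N}) (g : nat -> nat) :
  (forall k : 'I_N, k \in A -> exists2 x, x < n & val k = g x) ->
  #|A| <= n.
Proof.
case: N A => [|N] A H.
  by rewrite (_ : A = set0) ?cards0 //; apply/setP => -[m Hm]; exfalso; by rewrite ltn0 in Hm.
have -> : n = #|'I_n| by rewrite card_ord.
apply: leq_trans (leq_imset_card (fun x : 'I_n => (inord (g x) : 'I_N.+1)) _).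
apply: subset_leq_card; apply/subsetP => k /H [x Hx Hk].
apply/imsetP; exists (Ordinal Hx) => //; apply: val_inj => /=; rewrite -Hk inordK // Hk -Hk; exact: ltn_ord.
Qed.

Lemma sq_occ (u : seq T) i j p k0 t : i <= j -> j < size u ->
  is_period (factor u i j) p -> p <= j.+1 - i -> k0 < p ->
  k0 + t * p + 2 * p <= j.+1 - i ->
  factor u (i + (k0 + t * p)) (i + (k0 + t * p) + p - 1) = rot k0 (take p (factor u i j)) /\
  factor u (i + (k0 + t * p) + p) (i + (k0 + t * p) + 2 * p - 1) = rot k0 (take p (factor u i j)).
Proof.
move=> Hij Hju Hper Hpm Hk Hm.
have Hp : 0 < p by case/andP: Hper.
split.
  rewrite (factor_rot (j:=j)) //; last lia.
  by rewrite addnC modnMDl modn_small.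
have -> : i + (k0 + t * p) + p = i + (k0 + t.+1 * p) by rewrite mulSn; lia.
have -> : i + (k0 + t * p) + 2 * p - 1 = i + (k0 + t.+1 * p) + p - 1 by rewrite mulSn; lia.
rewrite (factor_rot (j:=j)) //; last by rewrite mulSn; lia.
by rewrite addnC modnMDl modn_small.
Qed.
End W.

Lemma main_bound (d : Order.disp_t) (T : finOrderType d) (u : seq T) (i j : nat) :
  is_run u i j -> 2 <= period (factor u i j) ->
  2 * ((j.+1 - i) %/ period (factor u i j)) <= #|handles u i j| + 4.
Proof.
rewrite /is_run => /and5P [Hij Hju Hp2 _ _] Hp.
set v := factor u i j in Hp2 Hp *. set p := period v in Hp2 Hp *.
set m := j.+1 - i in Hp2 *.
have Hm : m = j.+1 - i := erefl.
have Hsv : size v = m := size_factor Hij Hju.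
have [Hper Hple] := period_ok (v:=v) (ltac:(rewrite Hsv; lia)).
set q := m %/ p.
have Hq : q * p <= m by apply: leq_trunc_div.
have Hq2 : m < q.+1 * p by rewrite /q mulSn {1}(divn_eq m p) addnC ltn_add2r ltn_pmod; lia.
rewrite /handles -/v -/p.
set w := take p v.
have Hw : size w = p by rewrite /w size_take Hsv; case: ltnP => /= ?; lia.
case: eqP => Heq.
  have : j - i <= #|[set k : 'I_(size u).-1 | (i <= k) && (k < j)]|.
    apply: (card_ge (g := fun x => i + x)); first by move=> x y _ _; lia.
    move=> x Hx; split; first by rewrite -subn1; move: Hju; set n := size _ => Hju; lia.
    by move=> k Hk; rewrite inE Hk; apply/andP; split; lia.
  set c := #|_|; clearbody m q; nia.
have [k1 Hk1 E1] := cyc_rot (w:=w) true (ltac:(rewrite Hw; lia)).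
have [k2 Hk2 E2] := cyc_rot (w:=w) false (ltac:(rewrite Hw; lia)).
rewrite Hw in Hk1 Hk2; simpl in E1, E2.
have Hp0 : 0 < p by lia.
have Hpm : p <= j.+1 - i by rewrite -Hm -Hsv.
have Hmem : forall k0 t, k0 < p -> t < q - 2 ->
    (rot k0 w = cyc_min w \/ rot k0 w = cyc_max w) ->
    i + (k0 + t * p) + p - 1 < (size u).-1 /\
    forall k : 'I_(size u).-1, val k = i + (k0 + t * p) + p - 1 ->
    k \in [set k : 'I_(size u).-1 | [exists s : 'I_(size u),
             [&& i <= s, s + 2 * p <= j.+1, k == s + p - 1 :> nat &
              ((factor u s (s + p - 1) == cyc_min w) && (factor u (s + p) (s + 2 * p - 1) == cyc_min w))
              || ((factor u s (s + p - 1) == cyc_max w) && (factor u (s + p) (s + 2 * p - 1) == cyc_max w))]]].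
  move=> k0 t Hk0 Ht Hor.
  have Htp : (t + 3) * p <= q * p by rewrite leq_mul2r; apply/orP; right; lia.
  have Hb : k0 + t * p + 2 * p <= j.+1 - i.
    rewrite mulnDl in Htp; clearbody m q; nia.
  have [F1 F2] := sq_occ (t:=t) Hij Hju Hper Hpm Hk0 Hb.
  have Hs : i + (k0 + t * p) < size u by move: Hju; set n := size _ => ?; clearbody m q; nia.
  split; first by rewrite -subn1; move: Hju Hb; set n := size _ => ? ?; clearbody m q; nia.
  move=> k Hk; rewrite inE; apply/existsP; exists (Ordinal Hs) => /=.
  apply/and4P; split; [lia | clearbody m q; nia | by rewrite Hk |].
  rewrite F1 F2 -/w.
  by case: Hor => <-; rewrite eqxx // orbT.
have Hq3 : 2 <= q by clearbody m q; nia.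
rewrite (_ : 2 * q = 2 * (q - 2) + 4); last lia.
rewrite leq_add2r.
apply: (card_ge (g := fun x => if x < q - 2 then i + (k1 + x * p) + p - 1
                               else i + (k2 + (x - (q - 2)) * p) + p - 1)).
- have Hne : k1 <> k2 by move=> E; apply: Heq; rewrite E1 E2 E.
  have Hmod : forall k t, k < p -> (k + t * p) %% p = k.
    by move=> k t Hk; rewrite addnC modnMDl modn_small.
  move=> x y Hx Hy; case: ltnP => Hxq; case: ltnP => Hyq => E.
  + have E3 : x == y by rewrite -(eqn_pmul2r Hp0); apply/eqP; lia.
    by apply/eqP.
  + exfalso; apply: Hne.
    have E' : k1 + x * p = k2 + (y - (q - 2)) * p by lia.
    by rewrite -(Hmod k1 x) // -(Hmod k2 (y - (q - 2))) // E'.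
  + exfalso; apply: Hne.
    have E' : k1 + y * p = k2 + (x - (q - 2)) * p by lia.
    by rewrite -(Hmod k1 y) // -(Hmod k2 (x - (q - 2))) // E'.
  + have E3 : (x - (q - 2)) == (y - (q - 2)).
      rewrite -(eqn_pmul2r Hp0); apply/eqP; move: E; set a := (x - (q - 2)) * p; set b := (y - (q - 2)) * p => E; lia.
    move/eqP: E3 => HH; clear -Hxq Hyq HH; lia.
- move=> x Hx; case: (ltnP x (q - 2)) => /= Hxq.
  + by apply: Hmem => //; left.
  + apply: Hmem => //; [lia | by right].
Qed.

Lemma p1_card (d : Order.disp_t) (T : finOrderType d) (u : seq T) (i j : nat) :
  is_run u i j -> period (factor u i j) = 1 -> #|handles u i j| = j - i.
Proof.
rewrite /is_run => /and5P [Hij Hju Hp2 _ _] Hp1.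
rewrite Hp1 in Hp2.
have Hsv := size_factor Hij Hju.
have [a [v' Hv]] : exists a v', factor u i j = a :: v'.
  by move: Hsv; case: (factor u i j) => [|a v'] /=; [lia | exists a, v'].
rewrite /handles Hp1 Hv /= take0 /cyc_min /cyc_max /= ltxx eqxx /=.
apply/eqP; rewrite eqn_leq; apply/andP; split.
  apply: (card_le (g := fun x => i + x)) => k; rewrite inE => /andP [H1 H2].
  by exists (k - i) => /=; lia.
apply: (card_ge (g := fun x => i + x)); first by move=> x y _ _; lia.
move=> x Hx; split; first by rewrite -subn1; move: Hju; set n := size _ => ?; lia.
by move=> k Hk; rewrite inE Hk; apply/andP; split; lia.
Qed.

Local Open Scope ring_scope.

Theorem lemma1 (d : Order.disp_t) (T : finOrderType d) (u : seq T) (i j : nat) :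
  is_run u i j ->
  (period (factor u i j) = 1%N ->
     exponent u i j = (#|handles u i j|)%:R + 1) /\
  ((2 <= period (factor u i j))%N ->
     (Num.ceil (exponent u i j))%:~R <= (#|handles u i j|)%:R / 2 + 3 :> rat).
Proof.
move=> Hrun; have Hrun' := Hrun.
move: Hrun'; rewrite /is_run => /and5P [Hij Hju Hp2 _ _].
split.
  move=> Hp1; rewrite /exponent Hp1 p1_card // divr1.
  rewrite (_ : (j.+1 - i)%N = (j - i).+1); last lia.
  by rewrite -natr1.
move=> Hp.
have HB := main_bound Hrun Hp.
set p := period (factor u i j) in Hp HB *.
set c := #|handles u i j| in HB *.
set q := ((j.+1 - i) %/ p)%N in HB.
have Hq2 : (j.+1 - i < q.+1 * p)%N.
  by rewrite /q mulSn {1}(divn_eq (j.+1 - i) p) addnC ltn_add2r ltn_pmod; lia.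
have Hc : Num.ceil (exponent u i j) <= (q.+1)%:Z.
  rewrite ceil_le_int /exponent -/p ler_pdivrMr ?ltr0n; last lia.
  by rewrite -natrM ler_nat; lia.
apply: le_trans (_ : ((q.+1)%:Z)%:~R <= _).
  by rewrite ler_int.
have : ((2 * q)%:R <= (c + 4)%:R :> rat) by rewrite ler_nat.
rewrite natrM natrD /= => H.
rewrite -[X in X <= _]/((q.+1)%:R) -natr1; lra.
Qed.
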